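(* Let $\chi=\chi_D$ be an exceptional (real, non-principal) Dirichlet character modulo $D$, let $q\ge1$ and let $a$ be an integer with $(a,q)=1$. Then $$\psi(x,q,a)\le S_W'(x,q,a)+O\left(R\log^2 x\right),$$ where $S_W'(x,q,a)=\sum_{n\le x,\ n\equiv a\ (\mathrm{mod}\ q)}\lambda'_W(n)$.
   Context: $\psi(x,q,a)=\sum_{n\le x,\ n\equiv a\ (\mathrm{mod}\ q)}\Lambda(n)$ with $\Lambda$ the von Mangoldt function. $\lambda'=\chi\ast\log$, i.e. $\lambda'(n)=\sum_{d\mid n}\chi(d)\log(n/d)$. $R=\max\{D^5,\ x e^{-(\log x)^{1/2}}\}$. $P(n)$ is the smallest prime divisor of $n$, and $\lambda'_W(n)=\lambda'(n)\mathbf 1_{P(n)>R}\,\mu(n)^2$ with $\mu$ the Möbius function. *)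

(* Defs.v *)
From HB Require Import structures.
From mathcomp Require Import all_boot all_order all_algebra.
From mathcomp Require Import all_classical all_reals all_analysis.
Set Implicit Arguments. Unset Strict Implicit. Unset Printing Implicit Defensive.
Import Order.TTheory GRing.Theory Num.Theory.
Local Open Scope ring_scope.
Import numFieldNormedType.Exports.
Local Open Scope classical_set_scope.
Local Open Scope ring_scope.

Section Defs.
Variable R : realType.

(* von Mangoldt: Lambda(n) = log p if n = p^k (k >= 1, p prime), else 0 *)
Definition vonMangoldt (n : nat) : R :=
  if (1 < n)%N && (size (primes n) == 1%N) then ln (pdiv n)%:R else 0.

Definition squarefreeb (n : nat) : bool :=
  (0 < n)%N && all (fun p => logn p n <= 1)%N (primes n).
Definition mobius (n : nat) : R :=
  if squarefreeb n then (-1) ^+ size (primes n) else 0.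

Definition real_dirichlet_char (D : nat) (chi : nat -> R) : Prop :=
  [/\ chi 1%N = 1,
      (forall m n, chi (m * n)%N = chi m * chi n),
      (forall n, chi (n + D)%N = chi n) &
      (forall n, (chi n == 0) = ~~ coprime n D)].

Definition nonprincipal (D : nat) (chi : nat -> R) : Prop :=
  exists n, coprime n D /\ chi n != 1.

Definition L_series_converges_to (chi : nat -> R) (s l : R) : Prop :=
  series (fun k : nat => chi k.+1 * (k.+1)%:R `^ (- s)) @ \oo --> l.

Definition exceptional_char (c : R) (D : nat) (chi : nat -> R) : Prop :=
  [/\ real_dirichlet_char D chi, nonprincipal D chi &
      exists beta : R, 1 - c / ln D%:R <= beta /\ beta < 1 /\
                       L_series_converges_to chi beta 0].

Definition lambda' (chi : nat -> R) (n : nat) : R :=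
  \sum_(d <- divisors n) chi d * ln (n%:R / d%:R).

Definition Rpar (D : nat) (x : R) : R :=
  Num.max (D%:R ^+ 5) (x * expR (- Num.sqrt (ln x))).

Definition lambda'_W (chi : nat -> R) (D : nat) (x : R) (n : nat) : R :=
  lambda' chi n * (if Rpar D x < (pdiv n)%:R then 1 else 0) * mobius n ^+ 2.

Definition sum_ap (f : nat -> R) (x : R) (q : nat) (a : int) : R :=
  \sum_(1 <= n < (Num.truncn x).+1 | (n%:Z == a %[mod q%:Z])%Z) f n.

Definition psi (x : R) (q : nat) (a : int) : R := sum_ap vonMangoldt x q a.

Definition S'_W (chi : nat -> R) (D : nat) (x : R) (q : nat) (a : int) : R :=
  sum_ap (lambda'_W chi D x) x q a.

End Defs.

(* Main.v *)
Require Import Defs.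
From HB Require Import structures.
From mathcomp Require Import all_boot all_order all_algebra.
From mathcomp Require Import all_classical all_reals all_analysis.
From mathcomp Require Import cyclic ring lra zify.
Import Order.TTheory GRing.Theory Num.Theory.
Local Open Scope ring_scope.

Lemma chi_mod {R : realType} {D : nat} {chi : nat -> R} :
  real_dirichlet_char D chi -> forall m, chi m = chi (m %% D)%N.
Proof.
case=> _ _ Hp _ m; rewrite {1}(divn_eq m D).
elim: (m %/ D)%N => [|k IH]; first by rewrite mul0n add0n.
by rewrite mulSnr addnAC Hp.
Qed.

Lemma chi_pow {R : realType} {D : nat} {chi : nat -> R} :
  real_dirichlet_char D chi -> forall n k, chi (n ^ k)%N = chi n ^+ k.
Proof.
case=> H1 HM _ _ n; elim=> [|k IH]; first by rewrite expn0 expr0.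
by rewrite expnS HM IH exprS.
Qed.

Lemma chi_le1 {R : realType} {D : nat} {chi : nat -> R} :
  real_dirichlet_char D chi -> nonprincipal D chi -> forall n, `|chi n| <= 1.
Proof.
move=> Hc [m [cm nm]] n; have [H1 HM Hp H0] := Hc.
have D0 : (0 < D)%N.
  case: D Hc Hp H0 cm nm => // Hc Hp H0; rewrite /coprime gcdn0 => /eqP ->.
  by rewrite H1 eqxx.
case: (eqVneq (chi n) 0) => [->|nz]; first by rewrite normr0 ler01.
have cop : coprime n D by apply/negbFE; rewrite -H0; exact/negbTE.
have E := Euler_exp_totient cop.
have : chi n ^+ totient D = 1.
  by rewrite -(chi_pow Hc) (chi_mod Hc) E -(chi_mod Hc) H1.
move=> /(congr1 (fun z => `|z|)); rewrite normrX normr1 => /eqP.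
by rewrite pexpr_eq1 ?totient_gt0 // => /eqP ->.
Qed.

Lemma vM_ge0 (R : realType) n : 0 <= vonMangoldt R n.
Proof.
rewrite /vonMangoldt; case: ifP => // _; apply: ln_ge0.
by rewrite ler1n pdiv_gt0.
Qed.

Lemma vM_le (R : realType) n : (0 < n)%N -> vonMangoldt R n <= ln n%:R.
Proof.
move=> n0; rewrite /vonMangoldt; case: ifP => _.
  by rewrite ler_ln ?posrE ?ltr0n ?pdiv_gt0 // ler_nat pdiv_leq.
by apply: ln_ge0; rewrite ler1n.
Qed.

Lemma vM_prime (R : realType) p : prime p -> vonMangoldt R p = ln p%:R.
Proof.
move=> pp; rewrite /vonMangoldt primes_prime // prime_gt1 //=.
by rewrite /pdiv primes_prime.
Qed.

Lemma divisors_prime {p} : prime p -> perm_eq (divisors p) [:: 1%N; p].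
Proof.
move=> pp; apply: uniq_perm; first exact: divisors_uniq.
  by rewrite /= inE andbT neq_ltn prime_gt1 ?orbT.
move=> d; rewrite -dvdn_divisors ?prime_gt0 // !inE.
apply/idP/idP.
  case/primeP: pp => _ H /H; by rewrite orbC.
by case/orP => /eqP ->; rewrite ?dvd1n ?dvdnn.
Qed.

Lemma lambda'_prime (R : realType) (chi : nat -> R) p :
  chi 1%N = 1 -> prime p -> lambda' chi p = ln p%:R.
Proof.
move=> c1 pp; rewrite /lambda' (perm_big _ (divisors_prime pp)).
rewrite !big_cons big_nil c1 divr1 divff ?pnatr_eq0 -?lt0n ?prime_gt0 //.
by rewrite ln1 mulr0 mul1r /= !addr0.
Qed.

Lemma mobius_prime (R : realType) p : prime p -> mobius R p = -1.
Proof.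
move=> pp; rewrite /mobius /squarefreeb primes_prime //= prime_gt0 //.
by rewrite logn_prime // eqxx expr1.
Qed.

Lemma mobius_le1 (R : realType) n : `|mobius R n| <= 1.
Proof.
rewrite /mobius; case: ifP => _; last by rewrite normr0 ler01.
by rewrite normrX normrN1 expr1n.
Qed.



Lemma sum_const_seq {R : realType} (s : seq nat) (c : R) :
  \sum_(d <- s) c = c *+ size s.
Proof. by elim: s => [|y s IH]; rewrite ?big_nil ?big_cons //= IH mulrS. Qed.

Lemma size_divisors n : (0 < n)%N -> (size (divisors n) <= n)%N.
Proof.
move=> n0; rewrite -[X in (_ <= X)%N](size_iota 1 n).
apply: uniq_leq_size; first exact: divisors_uniq.
move=> d; rewrite -dvdn_divisors // mem_iota => dn.
have := dvdn_leq n0 dn; have := dvdn_gt0 n0 dn; lia.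
Qed.

Lemma lambda'_abs {R : realType} (chi : nat -> R) n :
  (forall d, `|chi d| <= 1) -> (0 < n)%N ->
  `|lambda' chi n| <= n%:R * ln n%:R.
Proof.
move=> hc n0; rewrite /lambda'.
apply: le_trans (ler_norm_sum _ _ _) _.
apply: (@le_trans _ _ (\sum_(d <- divisors n) ln (n%:R : R))).
  rewrite big_seq [X in _ <= X]big_seq; apply: ler_sum => d.
  rewrite -dvdn_divisors // => dn.
  have d0 := dvdn_gt0 n0 dn; have dle := dvdn_leq n0 dn.
  have d0' : (0 : R) < d%:R by rewrite ltr0n.
  have h1 : 1 <= (n%:R : R) / d%:R by rewrite ler_pdivlMr // mul1r ler_nat.
  have h2 : (n%:R : R) / d%:R <= n%:R.
    by rewrite ler_pdivrMr // ler_peMr ?ler0n // ler1n.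
  rewrite normrM (ger0_norm (ln_ge0 h1)).
  rewrite -[X in _ <= X]mul1r; apply: ler_pM => //; first exact: ln_ge0.
  rewrite ler_ln ?posrE //; last by rewrite ltr0n.
  by apply: lt_le_trans h1.
rewrite sum_const_seq -[X in X <= _]mulr_natl; apply: ler_wpM2r.
  by apply: ln_ge0; rewrite ler1n.
by rewrite ler_nat size_divisors.
Qed.

Lemma pdiv_sq n : (0 < n)%N -> ~~ prime n -> (pdiv n ^ 2 <= n)%N.
Proof.
move=> n0 np; rewrite leqNgt; apply/negP => H.
by have := ltn_pdiv2_prime n0 H; rewrite (negbTE np).
Qed.

Lemma ppow_repr n : (1 < n)%N -> size (primes n) == 1%N ->
  n = (pdiv n ^ logn (pdiv n) n)%N.
Proof.
move=> n1; case E: (primes n) => [|p [|]] // _.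
have pd : pdiv n = p by rewrite /pdiv E.
rewrite pd -p_part part_pnat_id //.
have := pnat_pi (ltnW n1).
rewrite (@eq_pnat _ p) // => q.
by rewrite !inE /= E inE.
Qed.

Lemma cnt1 N M : (\sum_(1 <= n < N.+1) (n <= M : nat) <= M)%N.
Proof.
suff : (\sum_(1 <= n < N.+1) (n <= M : nat) <= minn N M)%N.
  by move=> H; apply: leq_trans H (geq_minr _ _).
elim: N => [|N IH]; first by rewrite big_geq.
rewrite big_nat_recr //=.
case: (leqP N.+1 M) => h /=; lia.
Qed.

Lemma cnt_eq N m : (\sum_(1 <= n < N.+1) (n == m : nat) <= 1)%N.
Proof.
have -> : forall r : seq nat, (\sum_(n <- r) (n == m : nat))%N = count_mem m r.
  by elim=> [|y r IH]; rewrite ?big_nil ?big_cons //= IH.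
by rewrite count_uniq_mem ?iota_uniq // leq_b1.
Qed.

Lemma count_cover (P : pred nat) N s t (f : nat -> nat -> nat) :
  (forall n, (1 <= n < N.+1)%N -> P n ->
     exists b j, [/\ (b <= s)%N, (j <= t)%N & n = f b j]) ->
  (\sum_(1 <= n < N.+1) (P n : nat) <= s.+1 * t.+1)%N.
Proof.
move=> H.
apply: (@leq_trans (\sum_(1 <= n < N.+1) \sum_(b < s.+1) \sum_(j < t.+1)
                     (n == f b j : nat))).
  rewrite big_nat [X in (_ <= X)%N]big_nat; apply: leq_sum => n Hn.
  case Pn: (P n) => //.
  have [b [j [bs jt ->]]] := H n Hn Pn.
  rewrite (bigD1 (Ordinal (bs : (b < s.+1)%N))) //=.
  rewrite (bigD1 (Ordinal (jt : (j < t.+1)%N))) //= eqxx.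
  by rewrite -addnA leq_addr.
rewrite exchange_big /=.
apply: (@leq_trans (\sum_(b < s.+1) \sum_(j < t.+1) 1)).
  apply: leq_sum => b _; rewrite exchange_big /=.
  by apply: leq_sum => j _; apply: cnt_eq.
by rewrite sum_nat_const card_ord sum_nat_const card_ord muln1.
Qed.



Lemma sum_filter_le {R : realType} N (P : pred nat) (f g : nat -> R) :
  (forall n, (1 <= n < N.+1)%N -> f n <= g n) -> (forall n, 0 <= g n) ->
  \sum_(1 <= n < N.+1 | P n) f n <= \sum_(1 <= n < N.+1) g n.
Proof.
move=> hf hg; rewrite big_mkcond; apply: ler_sum_nat => n hn.
by case: ifP => _; [exact: hf | exact: hg].
Qed.

Lemma large_term {R : realType} (chi : nat -> R) D (x : R) n :
  chi 1%N = 1 -> 0 <= Rpar D x -> x <= Rpar D x ^+ 2 -> (1 <= n)%N ->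
  n%:R <= x ->
  vonMangoldt R n - lambda'_W chi D x n <=
  ln x * ((prime n && (n%:R <= Rpar D x)) +
          [&& (1 < n)%N, size (primes n) == 1%N & ~~ prime n])%:R.
Proof.
move=> c1 R0 Rx n1 nx.
have n0 : (0 : R) < n%:R by rewrite ltr0n.
have nL : ln n%:R <= ln x by rewrite ler_ln ?posrE //; apply: lt_le_trans nx.
have L0 : 0 <= ln (n%:R : R) by apply: ln_ge0; rewrite ler1n.
case pn: (prime n).
  rewrite vM_prime // /lambda'_W lambda'_prime // mobius_prime // pdiv_id //.
  rewrite !andbF addn0.
  case h: (n%:R <= Rpar D x).
    rewrite ltNge h /= mulr0 mul0r subr0 mulr1; exact: nL.
  rewrite ltNge h /= mulr1 sqrrN expr1n mulr1 subrr mulr0.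
  by [].
have pd : ((pdiv n)%:R : R) <= Rpar D x.
  rewrite -(ler_pXn2r (_ : 0 < 2)%N) ?nnegrE ?ler0n //.
  apply: (le_trans _ Rx); apply: (le_trans _ nx); rewrite -natrX ler_nat.
  by apply: pdiv_sq => //; rewrite pn.
rewrite /lambda'_W ltNge pd /= mulr0 mul0r subr0 /= add0n andbT.
rewrite /vonMangoldt; case: ifP => h.
  rewrite mulr1; apply: (le_trans _ nL).
  by rewrite ler_ln ?posrE ?ltr0n ?pdiv_gt0 // ler_nat pdiv_leq.
by rewrite mulr0.
Qed.

Lemma small_term {R : realType} (chi : nat -> R) D (x : R) n :
  (forall d, `|chi d| <= 1) -> (1 <= n)%N -> n%:R <= x ->
  vonMangoldt R n - lambda'_W chi D x n <= (1 + x) * ln x.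
Proof.
move=> hc n1 nx.
have n0 : (0 : R) < n%:R by rewrite ltr0n.
have nL : ln n%:R <= ln x by rewrite ler_ln ?posrE //; apply: lt_le_trans nx.
have L0 : 0 <= ln (n%:R : R) by apply: ln_ge0; rewrite ler1n.
have h1 := vM_le R _ n1.
have hw : `|lambda'_W chi D x n| <= `|lambda' chi n|.
  rewrite /lambda'_W !normrM -mulrA -[X in _ <= X]mulr1.
  apply: ler_wpM2l => //; apply: mulr_ile1; rewrite ?mulr_ge0 //.
    by case: ifP; rewrite ?normr1 ?normr0 ?ler01.
  by apply: mulr_ile1 => //; exact: mobius_le1.
have h2 := lambda'_abs chi n hc n1.
have h3 : n%:R * ln (n%:R : R) <= x * ln x by apply: ler_pM.
have h4 := ler_norm (- lambda'_W chi D x n); rewrite normrN in h4.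
lra.
Qed.



Theorem mainTheorem8 (R : realType) (c : R) (hc : 0 < c) :
  exists C : R, 0 < C /\
  forall (D : nat) (chi : nat -> R) (q : nat) (a : int) (x : R),
    exceptional_char c D chi ->
    (1 <= q)%N -> coprimez a q%:Z -> 2 <= x ->
    psi x q a <= S'_W chi D x q a + C * (Rpar D x * ln x ^+ 2).
Proof.
have ln2 : (0:R) < ln 2 by apply: ln_gt0; rewrite ltr1n.
set k := (ln (2:R))^-1.
have k0 : 0 < k by rewrite invr_gt0.
set E := expR 2 * (1 + expR 4) * k.
have E0 : 0 <= E.
  by rewrite /E !mulr_ge0 ?expR_ge0 ?addr_ge0 ?ler01 ?expR_ge0 // ltW.
exists (3 + 2 * k + E); split; first by lra.
move=> D chi q a x [Hrc Hnp _] q1 cop x2.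
have c1 : chi 1%N = 1 by case: Hrc.
have hch := chi_le1 Hrc Hnp.
set L := ln x. set N := Num.truncn x. set Rp := Rpar D x.
have x0 : 0 < x by lra.
have L2 : ln 2 <= L by rewrite /L ler_ln ?posrE //; lra.
have L0 : 0 <= L by lra.
have xE : expR L = x by rewrite /L lnK ?posrE.
have Rp0 : 0 <= Rp by rewrite /Rp /Rpar le_max exprn_ge0 ?ler0n.
have Rpx : x * expR (- Num.sqrt L) <= Rp by rewrite /Rp /Rpar le_max lexx orbT.
have Nx : N%:R <= x by rewrite truncn_le ltW.
have nx : forall n, (1 <= n < N.+1)%N -> n%:R <= x.
  move=> n /andP[_ hn]; apply: le_trans Nx; by rewrite ler_nat -ltnS.
suff H : psi x q a - S'_W chi D x q a <= (3 + 2 * k + E) * (Rp * L ^+ 2).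
  by rewrite -lerBlDl.
have -> : psi x q a - S'_W chi D x q a =
   \sum_(1 <= n < N.+1 | (n%:Z == a %[mod q%:Z])%Z)
      (vonMangoldt R n - lambda'_W chi D x n).
  by rewrite /psi /S'_W /sum_ap sumrB.
case: (leP 4 L) => hL.
  set u : R := Num.sqrt L.
  have u0 : 0 <= u by rewrite /u sqrtr_ge0.
  have uu : u ^+ 2 = L by rewrite /u sqr_sqrtr.
  have u2 : u <= L / 2.
    have u2' : 2 <= u.
      rewrite -(ler_pXn2r (_ : 0 < 2)%N) ?nnegrE // uu; apply: le_trans hL; by rewrite expr2 -natrM ler_nat.
    have h : u * 2 <= u * u := ler_wpM2l u0 u2'. rewrite expr2 in uu; by rewrite ler_pdivlMr // -uu.
  set y := expR (L / 2).
  have yy : y ^+ 2 = x by rewrite /y expr2 -expRD -splitr xE.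
  have y1 : 1 <= y.
    apply: (le_trans _ (expR_ge1Dx _)). by rewrite lerDl divr_ge0.
  have yR : y <= Rp.
    apply: (le_trans _ Rpx).
    have -> : y = x * expR (- (L / 2)).
      rewrite /y -xE -expRD; congr expR.
      by rewrite {2}(splitr L) addrK.
    by apply: ler_wpM2l; [lra | rewrite ler_expR lerN2].
  have Rx : x <= Rp ^+ 2.
    rewrite -yy !expr2; apply: ler_pM; lra.
  apply: le_trans (@sum_filter_le _ _ _ _ (fun n => L * ((prime n && (n%:R <= Rp)) +
          [&& (1 < n)%N, size (primes n) == 1%N & ~~ prime n])%:R) _ _) _.
  - move=> n hn; apply: large_term => //; [by case/andP: hn | exact: nx hn].
  - by move=> n; rewrite mulr_ge0 ?ler0n.
  rewrite -big_distrr /= -natr_sum big_split /= natrD.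
  set cA := (\sum_(1 <= i < N.+1) _)%N.
  set cB := (\sum_(1 <= i < N.+1) _)%N.
  have hc1 : cA%:R <= Rp.
    apply: (le_trans _ (_ : (Num.truncn Rp)%:R <= Rp)); last by rewrite truncn_le.
    rewrite ler_nat; apply: (leq_trans _ (cnt1 N (Num.truncn Rp))).
    rewrite /cA big_nat [X in (_ <= X)%N]big_nat; apply: leq_sum => n _.
    case: (prime n) => //=; case h: (n%:R <= Rp) => //=.
    by rewrite (truncn_ge_nat _ Rp0) h.
  set t := trunc_log 2 N.
  have hc2 : (cB <= (Num.truncn y).+1 * t.+1)%N.
    apply: count_cover => n hn /and3P [n1 sz np].
    have e := ppow_repr _ n1 sz.
    exists (pdiv n), (logn (pdiv n) n); split; last exact: e.
      rewrite truncn_ge_nat; last by lra.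
      rewrite -(@ler_pXn2r R 2) ?nnegrE ?ler0n //; last by lra. rewrite yy.
      apply: (le_trans _ (nx n hn)); rewrite -natrX ler_nat pdiv_sq //.
      exact: ltnW.
    apply: trunc_log_max => //.
    apply: (@leq_trans (pdiv n ^ logn (pdiv n) n)).
      case: (logn _ _) => [|j] //.
      by rewrite leq_exp2r // prime_gt1 // pdiv_prime.
    by rewrite -e -ltnS; case/andP: hn.
  have tL : t%:R <= k * L.
    have N0 : (0 < N)%N by rewrite truncn_gt0; lra.
    have h : (2 ^ t <= N)%N := trunc_logP (isT : (1 < 2)%N) N0.
    have h2 : (2%:R : R) ^+ t <= x.
      by rewrite -natrX; apply: (le_trans _ Nx); rewrite ler_nat.
    have hl : ln ((2%:R : R) ^+ t) <= L.
      by rewrite /L ler_ln ?posrE ?exprn_gt0 ?ltr0n.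
    rewrite lnXn ?ltr0n // in hl.
    by rewrite mulrC /k ler_pdivlMr // mulr_natl.
  have hc2R : cB%:R <= (y + 1) * (k * L + 1).
    apply: (le_trans (_ : _ <= ((Num.truncn y).+1 * t.+1)%:R)).
      by rewrite ler_nat.
    rewrite natrM -(natr1 (Num.truncn y)) -(natr1 t); apply: ler_pM; rewrite ?addr_ge0 ?ler0n //.
      by rewrite lerD2r truncn_le; lra.
    by rewrite lerD2r.
  have F1 : (y + 1) * (k * L + 1) <= (2 * Rp) * ((k + 1) * L).
    have kL0 : 0 <= k * L by rewrite mulr_ge0 // ltW.
    apply: ler_pM.
    - lra.
    - lra.
    - lra.
    - rewrite mulrDl mul1r; lra.
  have G : L * (cA%:R + cB%:R) <= L * (Rp + 2 * Rp * ((k + 1) * L)).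
    by apply: ler_wpM2l => //; lra.
  have H1 : Rp * L <= Rp * L ^+ 2.
    by apply: ler_wpM2l => //; rewrite expr2 ler_peMl //; lra.
  have H2 : 0 <= E * (Rp * L ^+ 2).
    by apply: mulr_ge0 => //; apply: mulr_ge0 => //; apply: exprn_ge0.
  apply: le_trans G _.
  have -> : L * (Rp + 2 * Rp * ((k + 1) * L)) =
            Rp * L + 2 * Rp * L ^+ 2 + 2 * (k * (Rp * L ^+ 2)).
    by rewrite expr2; ring.
  have -> : (3 + 2 * k + E) * (Rp * L ^+ 2) =
            3 * (Rp * L ^+ 2) + 2 * (k * (Rp * L ^+ 2)) + E * (Rp * L ^+ 2).
    by ring.
  lra.
have su : Num.sqrt L <= 2.
  have h : Num.sqrt L <= Num.sqrt ((2 : R) ^+ 2).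
    by apply: ler_wsqrtr; rewrite expr2; lra.
  by rewrite sqrtr_sqr ger0_norm in h.
have Rpx2 : x * expR (-2) <= Rp.
  apply: le_trans Rpx; apply: ler_wpM2l; first lra.
  by rewrite ler_expR lerN2.
have xe4 : x <= expR 4 by rewrite -xE ler_expR; lra.
apply: le_trans (@sum_filter_le _ _ _ _ (fun _ => (1 + x) * L) _ _) _.
- move=> n hn; apply: small_term => //; [by case/andP: hn | exact: nx hn].
- by move=> _; rewrite mulr_ge0 //; lra.
rewrite sumr_const_nat subn1 /= -[X in X <= _]mulr_natl.
have kL : 1 <= k * L.
  by rewrite /k ler_pdivlMl // mulr1.
set w := expR (-2 : R).
have w0 : 0 < w by rewrite /w expR_gt0.
have ew : expR 2 = w^-1 by rewrite /w expRN invrK.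
have P1 : N%:R * ((1 + x) * L) <= x * ((1 + expR 4) * L).
  apply: ler_pM => //; first by rewrite mulr_ge0 //; lra.
  by apply: ler_wpM2r => //; lra.
have P2 : x * ((1 + expR 4) * L) <= x * ((1 + expR 4) * L) * (k * L).
  rewrite -[X in X <= _]mulr1; apply: ler_wpM2l => //.
  by rewrite !mulr_ge0 // ?addr_ge0 ?expR_ge0 //; lra.
have P3 : x * ((1 + expR 4) * L) * (k * L) = E * (x * w) * L ^+ 2.
  rewrite /E ew; field; apply/eqP; lra.
have P4 : E * (x * w) * L ^+ 2 <= E * Rp * L ^+ 2.
  apply: ler_wpM2r; first exact: exprn_ge0.
  by apply: ler_wpM2l.
have P5 : 0 <= (3 + 2 * k) * (Rp * L ^+ 2).
  by rewrite !mulr_ge0 ?exprn_ge0 //; lra.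
have -> : (3 + 2 * k + E) * (Rp * L ^+ 2) =
          (3 + 2 * k) * (Rp * L ^+ 2) + E * Rp * L ^+ 2 by ring.
lra.
Qed.
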